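(* Let $h:\mathbb{R}^n\to\mathbb{R}$ be continuously differentiable and convex with $h^*:=\inf h$ and $\mathcal{X}^*:=\{x:h(x)=h^*\}\neq\emptyset$, and suppose $h$ satisfies the KL inequality. Then: (a) for every $\bar x\in\mathbb{R}^n$ there exist $\rho,\delta>0$ and $\vartheta\in(0,1)$ with $(h(x)-h^* )^\vartheta\le\rho\|\nabla h(x)\|$ for all $x\in B(\bar x;\delta)$; (b) for every compact set $S\subseteq\mathbb{R}^n$ there exist $\vartheta_S\in(0,1)$ and $\rho_S>0$ with $(h(x)-h^* )^{\vartheta_S}\le\rho_S\|\nabla h(x)\|$ for all $x\in S$.
   Context: $h$ satisfies the KL (Kurdyka–Łojasiewicz) inequality if for every $x^*\in\mathcal{X}^*$ there exist $\rho,\delta>0$ and $\vartheta\in(0,1)$ such that $(h(x)-h^* )^\vartheta\le\rho\|\nabla h(x)\|$ for all $x\in B(x^*;\delta)$. *)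

(* Defs.v *)
(* R^n is modelled as 'rV[R]_n over an arbitrary realType R. *)
From HB Require Import structures.
From mathcomp Require Import all_boot all_order all_algebra.
From mathcomp Require Import all_classical all_reals all_analysis.
Set Implicit Arguments. Unset Strict Implicit. Unset Printing Implicit Defensive.
Import Order.TTheory GRing.Theory Num.Theory.
Import numFieldNormedType.Exports.
Local Open Scope ring_scope.
Local Open Scope classical_set_scope.

Definition enorm (R : realType) (n : nat) (v : 'rV[R]_n) : R :=
  Num.sqrt (\sum_(i < n) (v 0 i) ^+ 2).

Definition ebasis (R : realType) (n : nat) (i : 'I_n) : 'rV[R]_n := delta_mx 0 i.

Definition grad (R : realType) (n : nat) (h : 'rV[R]_n -> R) (x : 'rV[R]_n) : 'rV[R]_n :=
  \row_(i < n) ('D_(ebasis R i) h x).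

Definition C1 (R : realType) (n : nat) (h : 'rV[R]_n -> R) : Prop :=
  (forall x, differentiable h x) /\
  (forall i : 'I_n, continuous (fun x => 'D_(ebasis R i) h x)).

Definition convex_fun (R : realType) (n : nat) (h : 'rV[R]_n -> R) : Prop :=
  forall (x y : 'rV[R]_n) (t : R), 0 <= t -> t <= 1 ->
    h (t *: x + (1 - t) *: y) <= t * h x + (1 - t) * h y.

Definition eball (R : realType) (n : nat) (c : 'rV[R]_n) (d : R) : set 'rV[R]_n :=
  [set x | enorm (x - c) < d].

Definition KL (R : realType) (n : nat) (h : 'rV[R]_n -> R) (hstar : R) : Prop :=
  forall xs : 'rV[R]_n, h xs = hstar ->
    exists (rho delta theta : R), [/\ 0 < rho, 0 < delta, 0 < theta, theta < 1 &
      forall x, eball xs delta x ->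
        powR (h x - hstar) theta <= rho * enorm (grad h x)].

(* Main.v *)
Require Import Defs.
From HB Require Import structures.
From mathcomp Require Import all_boot all_order all_algebra.
From mathcomp Require Import ring lra.
From mathcomp Require Import all_classical all_reals all_analysis.
Import Order.TTheory GRing.Theory Num.Theory.
Import numFieldNormedType.Exports.
Local Open Scope ring_scope.
Local Open Scope classical_set_scope.

Lemma dir_lin (R : realType) (n : nat) (h : 'rV[R]_n -> R) x v :
  differentiable h x ->
  'D_v h x = \sum_(i < n) v 0 i * 'D_(ebasis R i) h x.
Proof.
move=> hd; rewrite deriveE //.
rewrite {1}(matrix_sum_delta v) big_ord1 linear_sum.
apply: eq_bigr => i _; rewrite linearZ /= deriveE //.
Qed.

Lemma conv_min (R : realType) (n : nat) (h : 'rV[R]_n -> R) x :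
  differentiable h x -> convex_fun h ->
  (forall i, 'D_(ebasis R i) h x = 0) -> forall y, h x <= h y.
Proof.
move=> hd hc h0 y.
set v := y - x.
have D0 : 'D_v h x = 0.
  by rewrite dir_lin // big1 // => i _; rewrite h0 mulr0.
have cv : derivable h x v := diff_derivable hd.
have cvr := cvg_dnbhs_at_right cv.
rewrite -subr_ge0 -D0.
have -> : 'D_v h x = lim ((fun t => t^-1 *: ((h \o shift x) (t *: v) - h x)) @ 0^'+).
  by apply/esym/cvg_lim.
apply: limr_le; first by apply/cvg_ex; eexists; exact: cvr.
near=> t => /=.
have t0 : 0 < t by near: t; exact: nbhs_right_gt.
have t1 : t <= 1 by near: t; exact: nbhs_right_le ltr01.
have := hc y x t (ltW t0) t1.
have -> : t *: y + (1 - t) *: x = t *: v + x.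
  by rewrite /v; apply/rowP => j; rewrite !mxE; ring.
move=> H.
rewrite /shift /= -[t^-1 *: _]/(t^-1 * _).
rewrite ler_pdivrMl // mulrBr.
lra.
Unshelve. all: by end_near.
Qed.

Lemma entry_le_enorm (R : realType) n (v : 'rV[R]_n) j : `|v 0 j| <= enorm v.
Proof.
rewrite /enorm -sqrtr_sqr ler_wsqrtr // (bigD1 j) //= lerDl.
by apply: sumr_ge0 => i _; exact: sqr_ge0.
Qed.

Lemma nbhs_eball (R : realType) n (c : 'rV[R]_n) (A : set 'rV[R]_n) :
  nbhs c A -> exists2 d, 0 < d & eball c d `<=` A.
Proof.
move=> /nbhs_ballP [e e0 He]; exists e => // x Hx; apply: He.
split => // i j; rewrite /ball /= (ord1 i).
rewrite -normrN opprB; apply: le_lt_trans Hx.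
have := @entry_le_enorm _ _ (x - c) j; by rewrite !mxE.
Qed.

Lemma pow_half_le (R : realType) (a : R) : 0 <= a -> powR a (2^-1) <= 1 + a.
Proof.
move=> a0; have [a1|a1] := leP 1 a.
  by apply: le_trans (ler1_powR _ _) _ => //; [lra | lra].
have [->|an0] := eqVneq a 0; first by rewrite powR0 //; lra.
have : powR a (2^-1) <= powR a 0.
  apply: ger_powR; first by rewrite lt_neqAle eq_sym an0 a0 ltW.
  lra.
by rewrite powRr0; lra.
Qed.

Lemma pow_mono (R : realType) (a M t0 t : R) : 0 <= a -> a <= M ->
  0 < t0 -> t0 <= t -> t <= 1 -> powR a t <= (1 + M) * powR a t0.
Proof.
move=> a0 aM t00 t0t t1.
have [->|an0] := eqVneq a 0; first by rewrite !powR0 ?mulr0 //; lra.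
have ap : 0 < a by rewrite lt_neqAle eq_sym an0 a0.
have [a1|a1] := leP a 1.
  apply: le_trans (ger_powR _ t0t) _; first by rewrite ap a1.
  by rewrite -[X in X <= _]mul1r ler_wpM2r ?powR_ge0 //; lra.
have -> : t = t0 + (t - t0) by ring.
rewrite powRD; last by apply/implyP => _.
rewrite mulrC ler_wpM2r ?powR_ge0 //.
apply: le_trans (ler1_powR _ _) _; [lra|lra|lra].
Qed.

Lemma local_KL (R : realType) (n : nat) (h : 'rV[R]_n -> R) (hstar : R)
  (hC1 : C1 h) (hconv : convex_fun h)
  (hlb : forall x, hstar <= h x)
  (hXne : exists x, h x = hstar)
  (hKL : KL h hstar) xbar :
  exists (d t0 r0 M : R), [/\ 0 < d, 0 < t0, t0 < 1, 0 < r0 &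
   forall x, eball xbar d x -> h x - hstar <= M /\
     powR (h x - hstar) t0 <= r0 * enorm (grad h x)].
Proof.
have hcont : continuous h by move=> x; exact: differentiable_continuous (hC1.1 x).
have Hnear : \forall x \near xbar, h x - hstar <= h xbar - hstar + 1.
  near=> x.
  have : `|h xbar - h x| < 1.
    near: x; have hc : h x @[x --> xbar] --> h xbar := hcont xbar.
    by apply: cvgr_dist_lt; [exact: hc | exact: ltr01].
  rewrite ltr_norml; lra.
case: (eqVneq (h xbar) hstar) => [Heq|Hne].
  have [rho [delta [theta [r0 d0 t0 t1 Hk]]]] := hKL xbar Heq.
  have [d' d'0 Hd'] := @nbhs_eball _ _ _ _ Hnear.
  exists (Num.min delta d'), theta, rho, (h xbar - hstar + 1); split => //.
    by rewrite lt_min d0 d'0.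
  move=> x; rewrite /eball /= lt_min => /andP[x1 x2]; split.
    exact: Hd'.
  exact: Hk.
have [i Hi] : exists i, 'D_(ebasis R i) h xbar != 0.
  apply: contrapT => H.
  have H0 : forall i, 'D_(ebasis R i) h xbar = 0.
    by move=> i; apply/eqP/negPn/negP => Hn; apply: H; exists i.
  have [x0 hx0] := hXne.
  have := @conv_min _ _ _ _ (hC1.1 xbar) hconv H0 x0.
  have := hlb xbar.
  move: Hne; rewrite hx0 => /eqP Hne Hl Hu; apply: Hne; lra.
set c := `|'D_(ebasis R i) h xbar|.
have c0 : 0 < c by rewrite normr_gt0.
have Hg : \forall x \near xbar,
    `|'D_(ebasis R i) h xbar - 'D_(ebasis R i) h x| < c / 2.
  have hc : 'D_(ebasis R i) h x @[x --> xbar] --> 'D_(ebasis R i) h xbar := hC1.2 i xbar.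
  have c20 : 0 < c / 2 by lra.
  exact: (cvgr_dist_lt _ _ hc _ c20).
have [d d0 Hd] := @nbhs_eball _ _ _ _ (filterI Hnear Hg).
exists d, (2^-1), (2 * (2 + (h xbar - hstar)) / c), (h xbar - hstar + 1).
have hxs := hlb xbar.
split => //; try lra.
  apply: divr_gt0 => //; lra.
move=> x /Hd [Hx1 Hx2]; split => //.
have a0 : 0 <= h x - hstar by have := hlb x; lra.
apply: le_trans (@pow_half_le _ _ a0) _.
have Hgx : c / 2 <= enorm (grad h x).
  apply: le_trans (@entry_le_enorm _ _ _ i); rewrite /grad mxE.
  have := ler_normD ('D_(ebasis R i) h xbar - 'D_(ebasis R i) h x) ('D_(ebasis R i) h x).
  rewrite subrK -/c; lra.
have E : 2 * (2 + (h xbar - hstar)) / c * (c / 2) = 2 + (h xbar - hstar).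
  by field; rewrite gt_eqF.
have r0 : 0 <= 2 * (2 + (h xbar - hstar)) / c by apply: divr_ge0; lra.
have := ler_wpM2l r0 Hgx; rewrite E; lra.
Unshelve. all: by end_near.
Qed.

Lemma enorm_le (R : realType) n (v : 'rV[R]_n) e : 0 <= e ->
  (forall j, `|v 0 j| <= e) -> enorm v <= n%:R * e.
Proof.
move=> e0 He; rewrite /enorm.
have n0 : 0 <= n%:R * e :> R by apply: mulr_ge0.
rewrite -(ger0_norm n0) -sqrtr_sqr ler_wsqrtr //.
apply: le_trans (_ : \sum_(i < n) e ^+ 2 <= _).
  apply: ler_sum => i _; rewrite -real_normK ?num_real //.
  by rewrite lerXn2r ?nnegrE // (le_trans _ (He i)).
rewrite sumr_const card_ord exprMn -[X in X <= _]mulr_natl.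
apply: ler_wpM2r; first exact: sqr_ge0.
rewrite -natrX ler_nat; case: n {v He n0} => // n.
by rewrite expnS leq_pmulr // expn_gt0.
Qed.

Lemma eball_nbhs (R : realType) n (c : 'rV[R]_n) d : 0 < d -> nbhs c (eball c d).
Proof.
move=> d0; apply/nbhs_ballP.
have n1 : 0 < n.+1%:R :> R by rewrite ltr0n.
exists (d / n.+1%:R); first by rewrite /= divr_gt0.
move=> x [_ Hx]; rewrite /eball /=.
have H : forall j, `|(x - c) 0 j| <= d / n.+1%:R.
  move=> j; have := Hx 0 j; rewrite /ball /= mxE -normrN opprB => H.
  by rewrite mxE; exact: ltW.
have dn0 : 0 <= d / n.+1%:R by apply: divr_ge0; [exact: ltW | exact: ltW].
apply: le_lt_trans (@enorm_le _ _ _ _ dn0 H) _.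
rewrite mulrCA gtr_pMr // ltr_pdivrMr // mul1r ltr_nat ltnSn //.
Qed.

Theorem theorem3p10 (R : realType) (n : nat) (h : 'rV[R]_n -> R) (hstar : R)
  (hC1 : C1 h) (hconv : convex_fun h)
  (hlb : forall x, hstar <= h x)          (* hstar = inf h ... *)
  (hXne : exists x, h x = hstar)          (* ... and X* = {x | h x = hstar} is nonempty *)
  (hKL : KL h hstar) :
  (forall xbar : 'rV[R]_n,
     exists (rho delta theta : R), [/\ 0 < rho, 0 < delta, 0 < theta, theta < 1 &
       forall x, eball xbar delta x ->
         powR (h x - hstar) theta <= rho * enorm (grad h x)])
  /\
  (forall S : set 'rV[R]_n, compact S ->
     exists (thetaS rhoS : R), [/\ 0 < thetaS, thetaS < 1, 0 < rhoS &
       forall x, S x -> powR (h x - hstar) thetaS <= rhoS * enorm (grad h x)]).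
Proof.
split.
  move=> xbar.
  have [d [t0 [r0 [M [d0 t00 t01 r00 Hb]]]]] := @local_KL _ _ _ _ hC1 hconv hlb hXne hKL xbar.
  exists r0, d, t0; split => // x Hx; exact: (Hb x Hx).2.
move=> S cS.
have /compact_near_coveringP ncov := cS.
have Hcov : forall x, S x -> \forall x' \near x & r \near (pinfty_nbhs R),
    powR (h x' - hstar) (1 - 1 / r) <= r * enorm (grad h x').
  move=> x Sx.
  have [d [t0 [r0 [M [d0 t00 t01 r00 Hb]]]]] := @local_KL _ _ _ _ hC1 hconv hlb hXne hKL x.
  set K := Num.max (Num.max 2 (1 / (1 - t0))) ((1 + M) * r0).
  exists (eball x d, [set r | K < r]).
    split; first exact: eball_nbhs.
    exact: nbhs_pinfty_gt (num_real K).
  move=> [x' r] [/= Hx' Hr].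
  move: Hr; rewrite /K !gt_max => /andP[/andP[r2 rt] rM].
  have [HM Hp] := Hb x' Hx'.
  have a0 : 0 <= h x' - hstar by have := hlb x'; lra.
  have r0' : 0 < r by lra.
  have t0le : t0 <= 1 - 1 / r.
    have : 1 / r <= 1 - t0.
      rewrite ler_pdivrMr //.
      move: rt; rewrite ltr_pdivrMr; lra.
    lra.
  have := @pow_mono _ _ _ _ _ a0 HM t00 t0le.
  have t1 : 1 - 1 / r <= 1.
    have : 0 <= 1 / r by apply: divr_ge0; lra.
    lra.
  move=> /(_ t1) H1; apply: le_trans H1 _.
  have M0 : 0 <= 1 + M by lra.
  apply: le_trans (ler_wpM2l M0 Hp) _.
  rewrite mulrA; apply: ler_wpM2r; first by rewrite /enorm sqrtr_ge0.
  exact: ltW.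
have Hn := ncov R (pinfty_nbhs R) _ ltac:(exact: _) Hcov.
near (pinfty_nbhs R) => r.
have r2 : 2 < r by near: r; exact: nbhs_pinfty_gt (num_real 2).
exists (1 - 1 / r), r; split.
- have : 1 / r < 1 / 2.
    by rewrite !mul1r ltf_pV2 ?posrE; lra.
  lra.
- have : 0 < 1 / r by apply: divr_gt0; lra.
  lra.
- lra.
- by near: r.
Unshelve. all: by end_near.
Qed.
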